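(* Let $A$ be a real $m\times m$ matrix, $f\ne0$ in the range of $A$, $y$ the minimal-norm solution of $Ay=f$. Fix $q\in(0,1)$, $\alpha_0>0$, $C>1$, $\varepsilon\in(0,1)$. For each $\delta\in(0,1)$ let $f_\delta\in\mathbb{R}^m$ satisfy $\|f_\delta-f\|\le\delta$ and $(1-q)\alpha_0q\|Q_{\alpha_0q}^{-1}f_\delta\|>C\delta^\varepsilon$, and let $n_\delta$ be the smallest integer $n\ge1$ with $G_n\le C\delta^\varepsilon$ (the sequence $G_n$ built from $f_\delta$). Then $\lim_{\delta\to0}q^{n_\delta}=0$, and hence $\lim_{\delta\to0}n_\delta=\infty$.
   Context: $A^*$ is the transpose of $A$, $Q:=AA^*$, $Q_a:=Q+aI$ for $a>0$; $\|\cdot\|$ is the Euclidean norm. $G_0=0$ and $G_n=qG_{n-1}+(1-q)\alpha_0q^n\|Q_{\alpha_0q^n}^{-1}f_\delta\|$ for $n\ge1$. *)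

(* Defs.v *)
(* real numbers, limits, Rpower. Vectors of R^m are nat -> R
   (only indices < m matter); m x m matrices are nat -> nat -> R. *)
From Stdlib Require Import Reals ClassicalEpsilon.
Open Scope R_scope.

Fixpoint rsum (n : nat) (g : nat -> R) : R :=
  match n with O => 0 | S k => rsum k g + g k end.

Definition vec := nat -> R.
Definition mat := nat -> nat -> R.

Definition matvec (m : nat) (A : mat) (x : vec) : vec :=
  fun i => rsum m (fun j => A i j * x j).

Definition transp (A : mat) : mat := fun i j => A j i.

Definition vnorm (m : nat) (x : vec) : R := sqrt (rsum m (fun i => x i ^ 2)).

Definition veq (m : nat) (x y : vec) : Prop := forall i, (i < m)%nat -> x i = y i.

Definition Qop (m : nat) (A : mat) (x : vec) : vec :=
  matvec m A (matvec m (transp A) x).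
Definition Qa (m : nat) (A : mat) (a : R) (x : vec) : vec :=
  fun i => Qop m A x i + a * x i.

(* Q_a^{-1} g : the (unique, for a > 0) solution x of Q_a x = g,
   selected by Hilbert's epsilon. *)
Definition Qinv (m : nat) (A : mat) (a : R) (g : vec) : vec :=
  epsilon (inhabits (fun _ : nat => 0)) (fun x => veq m (Qa m A a x) g).

Fixpoint Gseq (m : nat) (A : mat) (q alpha0 : R) (fd : vec) (n : nat) : R :=
  match n with
  | O => 0
  | S k => q * Gseq m A q alpha0 fd k
           + (1 - q) * alpha0 * q ^ (S k)
             * vnorm m (Qinv m A (alpha0 * q ^ (S k)) fd)
  end.

(* Main.v *)
Require Import Defs.
From Stdlib Require Import Reals Lra Lia Classical ClassicalEpsilon FunctionalExtensionality.
Open Scope R_scope.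

Lemma rsum_S n f : rsum (S n) f = rsum n f + f n.
Proof. reflexivity. Qed.

Lemma rsum_ext n f g : (forall j, (j < n)%nat -> f j = g j) -> rsum n f = rsum n g.
Proof. induction n; intros H; simpl; [reflexivity|].
rewrite IHn by (intros; apply H; lia). rewrite H by lia. reflexivity. Qed.

Lemma rsum_plus n f g : rsum n (fun j => f j + g j) = rsum n f + rsum n g.
Proof. induction n; simpl; [ring|]. rewrite IHn; ring. Qed.

Lemma rsum_scal n c f : rsum n (fun j => c * f j) = c * rsum n f.
Proof. induction n; simpl; [ring|]. rewrite IHn; ring. Qed.

Lemma rsum_scal_r n c f : rsum n (fun j => f j * c) = rsum n f * c.
Proof. induction n; simpl; [ring|]. rewrite IHn; ring. Qed.

Lemma rsum_zero n f : (forall j, (j < n)%nat -> f j = 0) -> rsum n f = 0.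
Proof. intros H. rewrite (rsum_ext n f (fun j => 0 * 1)) by (intros; rewrite H; [ring|lia]).
rewrite rsum_scal. ring. Qed.

Lemma rsum_le n f g : (forall j, (j < n)%nat -> f j <= g j) -> rsum n f <= rsum n g.
Proof. induction n; intros H; simpl; [lra|].
assert (rsum n f <= rsum n g) by (apply IHn; intros; apply H; lia).
assert (f n <= g n) by (apply H; lia). lra. Qed.

Lemma rsum_nonneg n f : (forall j, (j < n)%nat -> 0 <= f j) -> 0 <= rsum n f.
Proof. intros H. rewrite <- (rsum_zero n (fun _ => 0)) by auto. apply rsum_le; auto. Qed.

Lemma rsum_abs n f : Rabs (rsum n f) <= rsum n (fun j => Rabs (f j)).
Proof. induction n; simpl. rewrite Rabs_R0; lra.
eapply Rle_trans; [apply Rabs_triang|]. lra. Qed.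

Lemma rsum_comm n p F : rsum n (fun i => rsum p (fun j => F i j)) = rsum p (fun j => rsum n (fun i => F i j)).
Proof. induction n; simpl. symmetry; apply rsum_zero; auto.
rewrite IHn. rewrite <- rsum_plus. reflexivity. Qed.

Lemma term_le_rsum n f k : (forall j, (j < n)%nat -> 0 <= f j) -> (k < n)%nat -> f k <= rsum n f.
Proof. induction n; intros H Hk; [lia|]. simpl.
assert (0 <= rsum n f) by (apply rsum_nonneg; intros; apply H; lia).
destruct (Nat.eq_dec k n). subst; lra.
assert (f k <= rsum n f) by (apply IHn; [intros; apply H|]; lia).
assert (0 <= f n) by (apply H; lia). lra. Qed.

Lemma rsum_update n f k v : (k < n)%nat ->
  rsum n (fun j => if Nat.eqb j k then v else f j) = rsum n f - f k + v.
Proof. induction n; intros Hk; [lia|]. simpl.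
destruct (Nat.eqb_spec n k).
- subst. rewrite (rsum_ext k _ f). ring. intros j Hj. destruct (Nat.eqb_spec j k); [lia|auto].
- rewrite IHn by lia. ring. Qed.

Definition sw (k N j : nat) : nat := if Nat.eqb j k then N else if Nat.eqb j N then k else j.

Ltac eqbs := repeat (match goal with |- context [Nat.eqb ?a ?b] => destruct (Nat.eqb_spec a b) end; cbn iota).

Lemma sw_invol k N j : sw k N (sw k N j) = j.
Proof. unfold sw. destruct (Nat.eqb_spec j k); destruct (Nat.eqb_spec j N); eqbs; lia. Qed.
Lemma sw_le k N j : (k <= N)%nat -> (j <= N)%nat -> (sw k N j <= N)%nat.
Proof. unfold sw. eqbs; lia. Qed.
Lemma sw_N k N : sw k N N = k.
Proof. unfold sw. eqbs; lia. Qed.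

Lemma rsum_sw k N f : (k <= N)%nat -> rsum (S N) (fun j => f (sw k N j)) = rsum (S N) f.
Proof. intros Hk. destruct (Nat.eq_dec k N).
- subst. apply rsum_ext. intros j _. f_equal. unfold sw. destruct (Nat.eqb_spec j N); eqbs; lia.
- rewrite !rsum_S. rewrite sw_N.
  rewrite (rsum_ext N _ (fun j => if Nat.eqb j k then f N else f j)).
  rewrite rsum_update by lia. ring.
  intros j Hj. unfold sw. eqbs; subst; try lia; reflexivity. Qed.

Lemma dep : forall m (v : nat -> nat -> R), exists lam : nat -> R,
  (exists j, (j <= m)%nat /\ lam j <> 0) /\
  forall i, (i < m)%nat -> rsum (S m) (fun j => lam j * v j i) = 0.
Proof.
induction m; intros v.
- exists (fun _ => 1). split. exists 0%nat; split; [lia|lra]. intros; lia.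
- assert (Hlast : forall w : nat -> nat -> R, w (S m) m <> 0 -> exists lam : nat -> R,
    (exists j, (j <= S m)%nat /\ lam j <> 0) /\
    forall i, (i < S m)%nat -> rsum (S (S m)) (fun j => lam j * w j i) = 0).
  { intros w Hp. set (p := w (S m) m) in *.
    destruct (IHm (fun j i => w j i - (w j m / p) * w (S m) i)) as [mu [[j0 [Hj0 Hmu]] Hsum]].
    exists (fun j => if Nat.eqb j (S m) then - rsum (S m) (fun j => mu j * (w j m / p)) else mu j).
    split. exists j0; split; [lia|]. destruct (Nat.eqb_spec j0 (S m)); [lia|auto].
    intros i Hi. rewrite rsum_S, Nat.eqb_refl.
    rewrite (rsum_ext (S m) _ (fun j => mu j * w j i))
      by (intros j Hj; destruct (Nat.eqb_spec j (S m)); [lia|reflexivity]).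
    assert (H0 : rsum (S m) (fun j => mu j * (w j i - w j m / p * w (S m) i)) = 0).
    { destruct (Nat.eq_dec i m).
      - subst. apply rsum_zero. intros j _. unfold p. field. exact Hp.
      - apply Hsum. lia. }
    rewrite (rsum_ext (S m) _ (fun j => mu j * w j i + (- w (S m) i) * (mu j * (w j m / p)))) in H0
      by (intros; ring).
    rewrite rsum_plus, rsum_scal in H0. lra. }
  destruct (classic (exists k, (k <= S m)%nat /\ v k m <> 0)) as [[k [Hk Hvk]] | Hno].
  + destruct (Hlast (fun j i => v (sw k (S m) j) i)) as [lam [[j0 [Hj0 Hl]] Hs]].
    { simpl. rewrite sw_N. exact Hvk. }
    exists (fun j => lam (sw k (S m) j)). split.
    * exists (sw k (S m) j0). split. apply sw_le; lia. rewrite sw_invol. exact Hl.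
    * intros i Hi. rewrite <- (rsum_sw k (S m)) by lia.
      rewrite <- (Hs i Hi). apply rsum_ext. intros j _. rewrite sw_invol. reflexivity.
  + destruct (IHm v) as [mu [[j0 [Hj0 Hmu]] Hsum]].
    exists (fun j => if Nat.eqb j (S m) then 0 else mu j). split.
    * exists j0. split; [lia|]. destruct (Nat.eqb_spec j0 (S m)); [lia|auto].
    * intros i Hi. rewrite rsum_S, Nat.eqb_refl.
      rewrite (rsum_ext (S m) _ (fun j => mu j * v j i))
        by (intros j Hj; destruct (Nat.eqb_spec j (S m)); [lia|reflexivity]).
      destruct (Nat.eq_dec i m).
      -- subst. rewrite rsum_zero. ring. intros j Hj.
         destruct (Req_dec (v j m) 0) as [E|E]. rewrite E; ring.
         exfalso. apply Hno. exists j. split; [lia|auto].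
      -- rewrite Hsum by lia. ring.
Qed.

Definition lin (L : vec -> vec) := forall x y c i, L (fun k => c * x k + y k) i = c * L x i + L y i.

Lemma matvec_lin m M : lin (matvec m M).
Proof. intros x y c i. unfold matvec. rewrite <- rsum_scal, <- rsum_plus. apply rsum_ext; intros; ring. Qed.

Lemma Qa_lin m A a : lin (Qa m A a).
Proof. intros x y c i. unfold Qa, Qop.
replace (matvec m (transp A) (fun k => c * x k + y k)) with
  (fun j => c * matvec m (transp A) x j + matvec m (transp A) y j)
  by (extensionality j; symmetry; apply matvec_lin).
rewrite matvec_lin. ring. Qed.

Lemma lin_zero L : lin L -> forall i, L (fun _ => 0) i = 0.
Proof. intros H i. pose proof (H (fun _ => 0) (fun _ => 0) 1 i) as E. cbv beta in E.
replace (fun _ : nat => 1 * 0 + 0) with (fun _ : nat => 0) in E by (extensionality k; ring).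
lra. Qed.

Lemma lin_combo L n lam (w : nat -> vec) i : lin L ->
  L (fun k => rsum n (fun j => lam j * w j k)) i = rsum n (fun j => lam j * L (w j) i).
Proof. intros HL. induction n. apply lin_zero; auto.
simpl. replace (fun k => rsum n (fun j => lam j * w j k) + lam n * w n k) with
  (fun k => lam n * w n k + rsum n (fun j => lam j * w j k)) by (extensionality k; ring).
rewrite HL, IHn. ring. Qed.

Lemma Qa_inj m A a x : 0 < a -> (forall i, (i < m)%nat -> Qa m A a x i = 0) ->
  forall k, (k < m)%nat -> x k = 0.
Proof. intros Ha H k Hk.
assert (S0 : rsum m (fun i => x i * Qa m A a x i) = 0) by (apply rsum_zero; intros; rewrite H; auto; ring).
unfold Qa in S0.
rewrite (rsum_ext m _ (fun i => x i * Qop m A x i + a * (x i ^ 2))) in S0 by (intros; ring).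
rewrite rsum_plus, rsum_scal in S0.
set (u := matvec m (transp A) x).
assert (E : rsum m (fun i => x i * Qop m A x i) = rsum m (fun j => u j * u j)).
{ unfold Qop. fold u. unfold matvec at 1.
  rewrite (rsum_ext m _ (fun i => rsum m (fun j => x i * A i j * u j)))
    by (intros; rewrite <- rsum_scal; apply rsum_ext; intros; ring).
  rewrite rsum_comm. apply rsum_ext. intros j _.
  unfold u at 2. unfold matvec, transp. rewrite <- rsum_scal_r. apply rsum_ext. intros; ring. }
assert (0 <= rsum m (fun j => u j * u j)) by (apply rsum_nonneg; intros; nra).
assert (0 <= rsum m (fun i => x i ^ 2)) by (apply rsum_nonneg; intros; nra).
assert (x k ^ 2 <= rsum m (fun i => x i ^ 2)) by (apply (term_le_rsum m (fun i => x i ^ 2)); auto; intros; nra).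
assert (rsum m (fun i => x i ^ 2) = 0) by nra.
nra. Qed.

Lemma Qa_solve m A a g : 0 < a -> exists x, veq m (Qa m A a x) g.
Proof. intros Ha.
set (e := fun j k => if Nat.eqb k j then 1 else 0).
set (v := fun j => if Nat.eqb j m then g else Qa m A a (e j)).
destruct (dep m v) as [lam [[j0 [Hj0 Hl]] Hs]].
assert (Hs' : forall i, (i < m)%nat -> rsum m (fun j => lam j * Qa m A a (e j) i) + lam m * g i = 0).
{ intros i Hi. rewrite <- (Hs i Hi). rewrite rsum_S. unfold v. rewrite Nat.eqb_refl. f_equal.
  apply rsum_ext. intros j Hj. destruct (Nat.eqb_spec j m); [lia|reflexivity]. }
assert (Hx : forall (c : nat -> R) k, (k < m)%nat -> rsum m (fun j => c j * e j k) = c k).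
{ intros c k Hk. rewrite (rsum_ext m _ (fun j => if Nat.eqb j k then c k else 0)).
  rewrite rsum_update by auto. rewrite rsum_zero by auto. ring.
  intros j Hj. unfold e. destruct (Nat.eqb_spec k j); destruct (Nat.eqb_spec j k); subst; try lia; ring. }
destruct (Req_dec (lam m) 0) as [Z|Z].
- exfalso.
  assert (H0 : forall k, (k < m)%nat -> rsum m (fun j => lam j * e j k) = 0).
  { apply (Qa_inj m A a); auto. intros i Hi. rewrite (lin_combo _ m lam e i (Qa_lin m A a)).
    pose proof (Hs' i Hi). rewrite Z in H. lra. }
  destruct (Nat.eq_dec j0 m). subst; auto.
  apply Hl. rewrite <- (Hx lam j0) by lia. apply H0; lia.
- exists (fun k => rsum m (fun j => (- / lam m * lam j) * e j k)).
  intros i Hi. rewrite (lin_combo _ m _ e i (Qa_lin m A a)).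
  rewrite (rsum_ext m _ (fun j => (- / lam m) * (lam j * Qa m A a (e j) i))) by (intros; ring).
  rewrite rsum_scal. pose proof (Hs' i Hi). 
  replace (rsum m (fun j => lam j * Qa m A a (e j) i)) with (- (lam m * g i)) by lra.
  field. auto.
Qed.

Lemma comp_le_vnorm m x i : (i < m)%nat -> Rabs (x i) <= vnorm m x.
Proof. intros Hi. unfold vnorm. rewrite <- (sqrt_pow2 (Rabs (x i))) by apply Rabs_pos.
apply sqrt_le_1_alt. rewrite pow2_abs. apply (term_le_rsum m (fun i => x i ^ 2)); auto.
intros; nra. Qed.

Lemma matvec_abs m M u b i : (forall j, (j < m)%nat -> Rabs (u j) <= b j) ->
  Rabs (matvec m M u i) <= rsum m (fun j => Rabs (M i j) * b j).
Proof. intros H. unfold matvec. eapply Rle_trans; [apply rsum_abs|].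
apply rsum_le. intros j Hj. rewrite Rabs_mult. apply Rmult_le_compat_l; [apply Rabs_pos|auto]. Qed.

Lemma Qa_bound m A a alpha0 x i0 : 0 < a <= alpha0 -> (i0 < m)%nat ->
  Rabs (Qa m A a x i0) <=
  (rsum m (fun j => Rabs (A i0 j) * rsum m (fun k => Rabs (A k j))) + alpha0) * vnorm m x.
Proof. intros Ha Hi. unfold Qa, Qop.
assert (Hu : forall j, (j < m)%nat -> Rabs (matvec m (transp A) x j) <= rsum m (fun k => Rabs (A k j)) * vnorm m x).
{ intros j Hj. eapply Rle_trans. apply (matvec_abs m _ x (fun _ => vnorm m x)).
  intros; apply comp_le_vnorm; auto. unfold transp. rewrite rsum_scal_r. lra. }
eapply Rle_trans; [apply Rabs_triang|].
assert (H1 := matvec_abs m A _ _ i0 Hu).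
rewrite (rsum_ext m _ (fun j => (Rabs (A i0 j) * rsum m (fun k => Rabs (A k j))) * vnorm m x)) in H1 by (intros; ring).
rewrite rsum_scal_r in H1.
rewrite Rabs_mult, (Rabs_right a) by lra.
assert (Rabs (x i0) <= vnorm m x) by (apply comp_le_vnorm; auto).
assert (0 <= Rabs (x i0)) by apply Rabs_pos.
nra. Qed.

Lemma Gseq_nonneg m A q alpha0 fd n : 0 < q < 1 -> 0 < alpha0 -> 0 <= Gseq m A q alpha0 fd n.
Proof. intros Hq Ha. induction n; simpl. lra.
assert (0 <= vnorm m (Qinv m A (alpha0 * (q * q ^ n)) fd)) by (unfold vnorm; apply sqrt_pos).
assert (0 <= q ^ n) by (apply pow_le; lra).
assert (0 <= (1 - q) * alpha0 * (q * q ^ n)) by (apply Rmult_le_pos; [nra|nra]).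
assert (0 <= q * Gseq m A q alpha0 fd n) by nra. nra. Qed.

Lemma pow_le1 q n : 0 <= q <= 1 -> q ^ n <= 1.
Proof. intros H. induction n; simpl. lra. assert (0 <= q ^ n) by (apply pow_le; lra). nra. Qed.

Theorem lemma2p8
  (m : nat) (A : mat) (f y : vec)
  (Hf_range : exists x : vec, veq m (matvec m A x) f)
  (Hf_nz : exists i, (i < m)%nat /\ f i <> 0)
  (Hy_sol : veq m (matvec m A y) f)
  (Hy_min : forall z : vec, veq m (matvec m A z) f -> vnorm m y <= vnorm m z)
  (q alpha0 C eps : R)
  (Hq : 0 < q < 1) (Ha0 : 0 < alpha0) (HC : 1 < C) (Heps : 0 < eps < 1)
  (fd : R -> vec) (nd : R -> nat)
  (Hfd : forall d, 0 < d < 1 ->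
     vnorm m (fun i => fd d i - f i) <= d /\
     (1 - q) * alpha0 * q * vnorm m (Qinv m A (alpha0 * q) (fd d))
       > C * Rpower d eps)
  (Hnd : forall d, 0 < d < 1 ->
     (1 <= nd d)%nat /\
     Gseq m A q alpha0 (fd d) (nd d) <= C * Rpower d eps /\
     (forall k, (1 <= k)%nat -> (k < nd d)%nat ->
        Gseq m A q alpha0 (fd d) k > C * Rpower d eps)) :
  (forall e, 0 < e -> exists eta, 0 < eta /\
     forall d, 0 < d < 1 -> d < eta -> Rabs (q ^ (nd d)) < e)
  /\
  (forall N : nat, exists eta, 0 < eta /\
     forall d, 0 < d < 1 -> d < eta -> (N <= nd d)%nat).
Proof.
destruct Hf_nz as [i0 [Hi0 Hf0]].
set (c0 := Rabs (f i0)).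
assert (Hc0 : 0 < c0) by (apply Rabs_pos_lt; auto).
set (K0 := rsum m (fun j => Rabs (A i0 j) * rsum m (fun k => Rabs (A k j))) + alpha0).
assert (HK0 : 0 < K0).
{ assert (0 <= rsum m (fun j => Rabs (A i0 j) * rsum m (fun k => Rabs (A k j)))).
  { apply rsum_nonneg. intros. apply Rmult_le_pos. apply Rabs_pos. apply rsum_nonneg. intros; apply Rabs_pos. }
  unfold K0; lra. }
assert (P1 : forall e, 0 < e -> exists eta, 0 < eta /\
     forall d, 0 < d < 1 -> d < eta -> Rabs (q ^ (nd d)) < e).
{ intros e He.
  set (L := (1 - q) * alpha0 * e * c0 / (2 * K0)).
  assert (HL : 0 < L) by (unfold L; apply Rdiv_lt_0_compat; [|lra];
    repeat apply Rmult_lt_0_compat; lra).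
  exists (Rmin (c0 / 2) (exp (ln (L / C) / eps))). split.
  { apply Rmin_pos; [lra| apply exp_pos]. }
  intros d Hd Hde.
  assert (Hd1 : d <= c0 / 2) by (eapply Rle_trans; [left; exact Hde| apply Rmin_l]).
  assert (Hd2 : d < exp (ln (L / C) / eps)) by (eapply Rlt_le_trans; [exact Hde| apply Rmin_r]).
  assert (HLC : 0 < L / C) by (apply Rdiv_lt_0_compat; lra).
  assert (Hpow : C * Rpower d eps < L).
  { unfold Rpower. 
    assert (ln d < ln (L / C) / eps).
    { rewrite <- (ln_exp (ln (L / C) / eps)). apply ln_increasing; lra. }
    assert (eps * ln d < ln (L / C)).
    { replace (ln (L / C)) with (eps * (ln (L / C) / eps)) by (field; lra).
      apply Rmult_lt_compat_l; lra. }
    assert (exp (eps * ln d) < L / C) by (rewrite <- (exp_ln (L / C)) by auto; apply exp_increasing; auto).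
    replace L with (C * (L / C)) by (field; lra). apply Rmult_lt_compat_l; lra. }
  destruct (Hnd d Hd) as [Hn1 [HG _]].
  destruct (Hfd d Hd) as [Hdist _].
  assert (Hqn : 0 < q ^ nd d) by (apply pow_lt; lra).
  rewrite Rabs_right by lra.
  apply Rnot_le_lt. intros Hqe.
  destruct (nd d) as [|k] eqn:Enk; [lia|].
  set (a := alpha0 * q ^ S k).
  assert (Ha : 0 < a <= alpha0).
  { unfold a. split. apply Rmult_lt_0_compat; auto.
    assert (q ^ S k <= 1) by (apply pow_le1; lra). nra. }
  set (x := Qinv m A a (fd d)).
  assert (Hx : veq m (Qa m A a x) (fd d)).
  { unfold x, Qinv. apply epsilon_spec. apply Qa_solve. lra. }
  assert (Hb := Qa_bound m A a alpha0 x i0 Ha Hi0). fold K0 in Hb.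
  rewrite (Hx i0 Hi0) in Hb.
  assert (Hdi : Rabs (fd d i0 - f i0) <= d).
  { eapply Rle_trans; [apply (comp_le_vnorm m (fun i => fd d i - f i) i0 Hi0)|exact Hdist]. }
  assert (Htr : Rabs (f i0) <= Rabs (fd d i0) + Rabs (fd d i0 - f i0)).
  { replace (f i0) with (fd d i0 + - (fd d i0 - f i0)) at 1 by ring.
    eapply Rle_trans; [apply Rabs_triang|]. rewrite Rabs_Ropp. lra. }
  fold c0 in Htr.
  assert (Hxn : c0 / 2 <= K0 * vnorm m x) by lra.
  assert (HGk : 0 <= Gseq m A q alpha0 (fd d) k) by (apply Gseq_nonneg; lra).
  change (Gseq m A q alpha0 (fd d) (S k)) with (q * Gseq m A q alpha0 (fd d) k + (1 - q) * alpha0 * q ^ (S k) * vnorm m x) in HG.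
  assert (HGl : (1 - q) * alpha0 * q ^ S k * vnorm m x <= C * Rpower d eps).
  { assert (0 <= q * Gseq m A q alpha0 (fd d) k) by nra. lra. }
  assert (Hnx : c0 / (2 * K0) <= vnorm m x).
  { apply (Rmult_le_reg_l K0); auto. replace (K0 * (c0 / (2 * K0))) with (c0 / 2) by (field; lra). lra. }
  assert (L <= (1 - q) * alpha0 * q ^ S k * vnorm m x).
  { unfold L. replace ((1 - q) * alpha0 * e * c0 / (2 * K0)) with (((1 - q) * alpha0) * e * (c0 / (2 * K0))) by (field; lra).
    assert (0 < (1 - q) * alpha0) by nra.
    assert (0 <= c0 / (2 * K0)) by (apply Rlt_le, Rdiv_lt_0_compat; lra).
    apply Rmult_le_compat; try nra. }
  lra. }
split; auto.
intros N. destruct (P1 (q ^ N)) as [eta [Heta H]]. apply pow_lt; lra.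
exists eta. split; auto. intros d Hd Hde. specialize (H d Hd Hde).
destruct (Nat.le_gt_cases N (nd d)) as [Hle|Hlt]; auto. exfalso.
replace N with (nd d + (N - nd d))%nat in H by lia. rewrite pow_add in H.
assert (0 < q ^ nd d) by (apply pow_lt; lra).
assert (q ^ (N - nd d) <= 1) by (apply pow_le1; lra).
rewrite Rabs_right in H by lra. nra.
Qed.
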